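(* Under the degree-corrected stochastic block model $DCSBM(n,P,\Theta,Z)$, the matrix $X^*$ has exactly $K$ distinct rows, and for any nodes $i\ne j$ with $g_i=g_j$, the $i$-th row of $X^*$ equals the $j$-th row of $X^*$.
   Context: $n$ nodes, each in exactly one of $K$ communities, $g_i$ the community of node $i$, every community nonempty; $Z\in\{0,1\}^{n\times K}$ with $Z_{ik}=1$ iff $g_i=k$. $P$ is a $K\times K$ symmetric, nonnegative, nonsingular, irreducible matrix; $\theta\in\mathbb{R}^n$ has positive entries and $\Theta=\mathrm{diag}(\theta)$. Let $\Omega=\Theta ZPZ'\Theta$, which has rank $K$. Let $\lambda_1,\dots,\lambda_K$ be the nonzero eigenvalues of $\Omega$ in descending order of magnitude, $E_\Omega=\mathrm{diag}(\lambda_1,\dots,\lambda_K)$, and $V_\Omega$ the $n\times K$ matrix whose $k$-th column is a unit-norm eigenvector of $\Omega$ for $\lambda_k$. Set $X=V_\Omega E_\Omega$; $X^*$ is obtained by dividing each row of $X$ by its Euclidean norm. *)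

(* Defs.v *)
From HB Require Import structures.
From mathcomp Require Import all_boot all_order all_algebra.
Set Implicit Arguments. Unset Strict Implicit. Unset Printing Implicit Defensive.
Import Order.TTheory GRing.Theory Num.Theory.
Local Open Scope ring_scope.

Definition memb_mx (R : nzRingType) n K (g : 'I_n -> 'I_K) : 'M[R]_(n, K) :=
  \matrix_(i < n, k < K) (g i == k)%:R.

Definition dcsbm_Omega (R : nzRingType) n K (g : 'I_n -> 'I_K)
  (P : 'M[R]_K) (theta : 'rV[R]_n) : 'M[R]_n :=
  diag_mx theta *m memb_mx R g *m P *m (memb_mx R g)^T *m diag_mx theta.

Definition irreducible_mx (R : numDomainType) K (P : 'M[R]_K) : Prop :=
  forall i j : 'I_K, exists m : nat, 0 < (P ^+ m) i j.

Definition row_normalize (R : rcfType) n K (X : 'M[R]_(n, K)) : 'M[R]_(n, K) :=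
  \matrix_(i < n, k < K) (X i k / Num.sqrt (\sum_(l < K) X i l ^+ 2)).

(* Main.v *)
Require Import Defs.
From HB Require Import structures.
From mathcomp Require Import all_boot all_order all_algebra.
Import Order.TTheory GRing.Theory Num.Theory.
Local Open Scope ring_scope.

Theorem lemma2 (R : rcfType) (n K : nat) (g : 'I_n -> 'I_K)
  (P : 'M[R]_K) (theta : 'rV[R]_n)
  (lam : 'I_K -> R) (V : 'M[R]_(n, K)) :
  (* every community nonempty *)
  (forall k : 'I_K, exists i : 'I_n, g i = k) ->
  (* P symmetric, nonnegative, nonsingular, irreducible *)
  P^T = P ->
  (forall k l : 'I_K, 0 <= P k l) ->
  P \in unitmx ->
  irreducible_mx P ->
  (* theta positive *)
  (forall i : 'I_n, 0 < theta 0 i) ->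
  (* lam_1..lam_K: the nonzero eigenvalues of Omega, descending magnitude,
     V: orthonormal columns, column k a unit eigenvector for lam k *)
  (forall k : 'I_K, lam k != 0) ->
  (forall k l : 'I_K, (k <= l)%N -> `|lam l| <= `|lam k|) ->
  V^T *m V = 1%:M ->
  (forall k : 'I_K, dcsbm_Omega g P theta *m col k V = lam k *: col k V) ->
  let X := V *m diag_mx (\row_k lam k) in
  let Xs := row_normalize X in
  size (undup [seq row i Xs | i <- enum 'I_n]) = K /\
  (forall i j : 'I_n, i != j -> g i = g j -> row i Xs = row j Xs).
Proof.
move=> gsurj _ _ _ _ thpos lam0 _ VV Veig X Xs.
set Om := dcsbm_Omega g P theta.
set Z := memb_mx R g.
set D := diag_mx theta.
set M := P *m Z^T *m D *m V.
have XOm : X = Om *m V.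
  apply/matrixP=> i k; rewrite /X mul_mx_diag !mxE.
  have := congr1 (fun A : 'cV[R]_n => A i 0) (Veig k); rewrite !mxE => H.
  rewrite mulrC -H; apply: eq_bigr => j _; by rewrite !mxE.
have XDZM : X = D *m Z *m M by rewrite XOm /Om /dcsbm_Omega /M !mulmxA.
have Xent : forall i c, X i c = theta 0 i * M (g i) c.
  move=> i c; rewrite XDZM -mulmxA mul_diag_mx mxE; congr (_ * _).
  rewrite mxE (bigD1 (g i)) //= big1 ?addr0; first by rewrite mxE eqxx mul1r.
  by move=> j /negbTE gj; rewrite mxE eq_sym gj mul0r.
have Munit : M \in unitmx.
  have : V^T *m X = diag_mx (\row_k lam k) by rewrite /X mulmxA VV mul1mx.
  rewrite XDZM mulmxA => E.
  have : diag_mx (\row_k lam k) \in unitmx.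
    rewrite unitmxE det_diag unitfE; apply/prodf_neq0 => k _; by rewrite mxE lam0.
  by rewrite -E unitmx_mul => /andP[_ ->].
pose U := \matrix_(k, c) (M k c / Num.sqrt (\sum_l M k l ^+ 2)).
have rowXs : forall i, row i Xs = row (g i) U.
  move=> i; apply/rowP => c; rewrite mxE [RHS]mxE /Xs /row_normalize mxE [RHS]mxE Xent.
  under eq_bigr do rewrite Xent exprMn.
  rewrite -mulr_sumr sqrtrM ?sqr_ge0 // sqrtr_sqr ger0_norm ?ltW //.
  by rewrite invfM mulrACA divff ?mul1r // gt_eqF.
split; last by move=> i j _ gij; rewrite !rowXs gij.
have inj0 (v : 'rV_K) : v *m M = 0 -> v = 0.
  by move=> H; rewrite -(mulmxK Munit v) H mul0mx.
pose a k := (Num.sqrt (\sum_l M k l ^+ 2))^-1.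
have rowU k : row k U = a k *: row k M by apply/rowP=> c; rewrite !mxE mulrC.
have anz k : a k != 0.
  rewrite invr_eq0 sqrtr_eq0; apply/negP => Hle.
  have S0 : \sum_l M k l ^+ 2 = 0 by apply/le_anti; rewrite Hle sumr_ge0 // => l _; rewrite sqr_ge0.
  have R0 : row k M = 0.
    apply/rowP => c; rewrite mxE [RHS]mxE; apply/eqP; rewrite -sqrf_eq0; apply/eqP.
    exact: (psumr_eq0P (fun l _ => sqr_ge0 (M k l)) S0 (i:=c) isT).
  have := congr1 (fun v : 'rV_K => v 0 k) (inj0 _ (etrans (esym (rowE k M)) R0)).
  by rewrite !mxE !eqxx /= => /eqP; rewrite oner_eq0.
have Uinj : injective (fun k => row k U).
  move=> k l /= E; apply/eqP; apply/negPn/negP => kl.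
  pose v : 'rV_K := a k *: 'e_k - a l *: 'e_l.
  have : v *m M = 0.
    by rewrite mulmxBl -!scalemxAl -!rowE -!rowU E subrr.
  move/inj0/(congr1 (fun v : 'rV_K => v 0 k)); have lk : (l == k) = false by rewrite eq_sym (negbTE kl).
  rewrite !mxE !eqxx (negbTE kl) /=.
  by rewrite mulr1 mulr0 subr0 => /eqP; rewrite (negbTE (anz k)).
have -> : [seq row i Xs | i <- enum 'I_n] = [seq (fun k => row k U) k | k <- [seq g i | i <- enum 'I_n]].
  by rewrite -map_comp; apply: eq_map => i /=; rewrite rowXs.
rewrite undup_map_inj // size_map.
rewrite -(card_uniqP (undup_uniq _)) -[RHS]card_ord; apply: eq_card => k.
rewrite mem_undup; have [i gi] := gsurj k; apply/mapP; exists i; by rewrite ?mem_enum ?gi.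
Qed.
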